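(* Let $\Omega\subseteq\mathbb{R}$ and fix $t\in\mathbb{N}$. Let $f^t,f^{t+1}:\Omega\to\mathbb{R}$ be continuously differentiable and strictly convex, and suppose that for all $z\in\Omega$: (i) $(f^t)'$ is differentiable and concave (at $z$), and (ii) $(f^{t+1})'(z)\le(f^t)'(z)$. Then for any $x,m\in\Omega$ with $x\le m$ and any $y,n\in\Omega$ such that $(f^{t+1})'(y)-(f^t)'(x)=(f^{t+1})'(n)-(f^t)'(m)=\xi$ for a fixed scalar $\xi$, we have $D^{t,t+1}(x,y)\le D^{t,t+1}(m,n)$.
   Context: The skewed Bregman divergence is $D^{t,t+1}(u,v)=f^t(u)-f^{t+1}(v)-(u-v)\,(f^{t+1})'(v)$. *)

(* Defs.v *)
From Stdlib Require Import Reals.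
From Coquelicot Require Import Coquelicot.
Open Scope R_scope.

Definition is_interval (Omega : R -> Prop) : Prop :=
  forall a b c, Omega a -> Omega c -> a <= b -> b <= c -> Omega b.

Definition strictly_convex_on (Omega : R -> Prop) (F : R -> R) : Prop :=
  forall a b l, Omega a -> Omega b -> a <> b -> 0 < l < 1 ->
    F (l * a + (1 - l) * b) < l * F a + (1 - l) * F b.

Definition concave_on (Omega : R -> Prop) (G : R -> R) : Prop :=
  forall a b l, Omega a -> Omega b -> 0 <= l <= 1 ->
    l * G a + (1 - l) * G b <= G (l * a + (1 - l) * b).

Definition C1_on (Omega : R -> Prop) (F : R -> R) : Prop :=
  forall z, Omega z -> ex_derive F z /\ continuous (Derive F) z.

Definition skewD (f : nat -> R -> R) (t : nat) (u v : R) : R :=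
  f t u - f (S t) v - (u - v) * Derive (f (S t)) v.

(* Main.v *)
Require Import Defs.
From Stdlib Require Import Reals Lra Lia Psatz.
From Stdlib Require Import ClassicalEpsilon.
From Coquelicot Require Import Coquelicot.
Open Scope R_scope.

Lemma tangent_ineq (Omega : R -> Prop) (F : R -> R) :
  strictly_convex_on Omega F -> C1_on Omega F ->
  forall a b, Omega a -> Omega b -> F a + Derive F a * (b - a) <= F b.
Proof.
  intros Hc HC a b Ha Hb.
  destruct (Req_dec a b) as [->|Hab]; [nra|].
  destruct (Rle_or_lt (F a + Derive F a * (b - a)) (F b)) as [H|H]; [exact H|].
  exfalso.
  set (d := Derive F a). assert (Hdd : Derive F a = d) by reflexivity. rewrite Hdd in H.
  assert (Hd : derivable_pt_lim F a d).
  { apply is_derive_Reals. apply Derive_correct. apply (HC a Ha). }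
  set (e := (F a + d * (b - a) - F b) / Rabs (b - a)).
  assert (Hab' : 0 < Rabs (b - a)) by (apply Rabs_pos_lt; lra).
  assert (He : 0 < e). { unfold e. apply Rdiv_lt_0_compat. all: lra. }
  unfold derivable_pt_lim in Hd. destruct (Hd e He) as [delta Hdel].
  set (s := Rmin (1/2) (delta / (2 * Rabs (b - a)))).
  assert (Hdp : 0 < delta) by apply cond_pos.
  assert (Hs0 : 0 < s).
  { unfold s; apply Rmin_glb_lt; [lra|]. apply Rdiv_lt_0_compat; lra. }
  assert (Hs1 : s < 1) by (unfold s; generalize (Rmin_l (1/2) (delta / (2 * Rabs (b - a)))); lra).
  assert (Hs2 : s * (2 * Rabs (b - a)) <= delta).
  { unfold s. generalize (Rmin_r (1/2) (delta / (2 * Rabs (b - a)))); intro.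
    apply Rle_trans with (delta / (2 * Rabs (b - a)) * (2 * Rabs (b - a))).
    apply Rmult_le_compat_r; lra. right; field; lra. }
  set (hh := s * (b - a)).
  assert (Hhh : hh <> 0).
  { unfold hh. intro E. apply Rmult_integral in E. destruct E; lra. }
  assert (Hhr : Rabs hh < delta).
  { unfold hh. rewrite Rabs_mult, (Rabs_right s) by lra. nra. }
  specialize (Hdel hh Hhh Hhr).
  assert (Hcv := Hc b a s Hb Ha (not_eq_sym Hab) (conj Hs0 Hs1)).
  replace (s * b + (1 - s) * a) with (a + hh) in Hcv by (unfold hh; ring).
  set (Q := (F (a + hh) - F a) / hh) in *.
  assert (HQ : Q * hh = F (a + hh) - F a) by (unfold Q; field; exact Hhh).
  assert (H1 : Q * (b - a) < F b - F a).
  { assert (s * (Q * (b - a)) < s * (F b - F a)).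
    { replace (s * (Q * (b - a))) with (Q * hh) by (unfold hh; ring). lra. }
    nra. }
  assert (H2 : F b - F a = d * (b - a) - e * Rabs (b - a)).
  { unfold e. field. lra. }
  apply Rabs_def2 in Hdel. destruct Hdel as [Hd1 Hd2].
  destruct (Rle_or_lt a b) as [Hle|Hlt].
  - rewrite Rabs_right in H2 by lra. nra.
  - rewrite Rabs_left in H2 by lra. nra.
Qed.

Lemma deriv_mono (Omega : R -> Prop) (F : R -> R) :
  strictly_convex_on Omega F -> C1_on Omega F ->
  forall a b, Omega a -> Omega b -> a <= b -> Derive F a <= Derive F b.
Proof.
  intros Hc HC a b Ha Hb Hab.
  destruct (Req_dec a b) as [->|Hne]; [lra|].
  pose proof (tangent_ineq Omega F Hc HC a b Ha Hb).
  pose proof (tangent_ineq Omega F Hc HC b a Hb Ha).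
  nra.
Qed.

Lemma three_point (Omega : R -> Prop) (G : R -> R) :
  concave_on Omega G -> forall p q r, Omega p -> Omega r -> p <= q -> q <= r ->
  (r - q) * G p + (q - p) * G r <= (r - p) * G q.
Proof.
  intros Hc p q r Hp Hr H1 H2.
  destruct (Req_dec p r) as [E|E].
  { subst r. assert (q = p) by lra. subst q. lra. }
  set (l := (r - q) / (r - p)).
  assert (Hl : 0 <= l <= 1).
  { unfold l; split. apply Rdiv_le_0_compat; lra.
    apply Rmult_le_reg_r with (r - p); [lra|]. field_simplify; lra. }
  pose proof (Hc p r l Hp Hr Hl) as H.
  replace (l * p + (1 - l) * r) with q in H by (unfold l; field; lra).
  assert (Hrp : 0 < r - p) by lra.
  apply Rmult_le_compat_l with (r := r - p) in H; [|lra].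
  replace ((r - p) * (l * G p + (1 - l) * G r)) with
     ((r - q) * G p + (q - p) * G r) in H by (unfold l; field; lra).
  exact H.
Qed.

Lemma key_ineq (Omega : R -> Prop) (G : R -> R) :
  concave_on Omega G ->
  (forall a b, Omega a -> Omega b -> a <= b -> G a <= G b) ->
  forall u1 u2 v, Omega u1 -> Omega u2 -> Omega v -> u1 <= u2 ->
  (G v - G u1) * (u2 - u1) <= (v - u1) * (G u2 - G u1) + (u2 - u1) * (G u2 - G u1).
Proof.
  intros Hc Hm u1 u2 v H1 H2 Hv Hu.
  assert (HG : G u1 <= G u2) by auto.
  destruct (Rle_or_lt u2 v) as [Hv2|Hv2].
  { pose proof (three_point Omega G Hc u1 u2 v H1 Hv Hu Hv2). nra. }
  destruct (Rle_or_lt v u1) as [Hv1|Hv1].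
  { pose proof (three_point Omega G Hc v u1 u2 Hv H2 Hv1 Hu). nra. }
  assert (G v <= G u2) by (apply Hm; auto; lra).
  assert (G u1 <= G v) by (apply Hm; auto; lra).
  nra.
Qed.

Lemma step_ineq (Omega : R -> Prop) (f : nat -> R -> R) (t : nat) (xi : R)
  (HC1t : C1_on Omega (f t)) (HC1t1 : C1_on Omega (f (S t)))
  (Hsct : strictly_convex_on Omega (f t))
  (Hsct1 : strictly_convex_on Omega (f (S t)))
  (Hconc : concave_on Omega (Derive (f t)))
  (Hle : forall z, Omega z -> Derive (f (S t)) z <= Derive (f t) z) :
  forall u1 u2 v1 v2, Omega u1 -> Omega u2 -> Omega v1 -> Omega v2 -> u1 <= u2 ->
  Derive (f (S t)) v1 = Derive (f t) u1 + xi ->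
  Derive (f (S t)) v2 = Derive (f t) u2 + xi ->
  - 2 * ((u2 - u1) * (Derive (f t) u2 - Derive (f t) u1))
    <= skewD f t u2 v2 - skewD f t u1 v1.
Proof.
  intros u1 u2 v1 v2 Hu1 Hu2 Hv1 Hv2 Hu E1 E2.
  unfold skewD.
  pose proof (tangent_ineq Omega (f t) Hsct HC1t u1 u2 Hu1 Hu2) as T1.
  pose proof (tangent_ineq Omega (f (S t)) Hsct1 HC1t1 v2 v1 Hv2 Hv1) as T2.
  pose proof (key_ineq Omega (Derive (f t)) Hconc
     (deriv_mono Omega (f t) Hsct HC1t) u1 u2 v1 Hu1 Hu2 Hv1 Hu) as K.
  pose proof (Hle v1 Hv1) as L.
  assert (M : xi * (u2 - u1) <= (Derive (f t) v1 - Derive (f t) u1) * (u2 - u1)).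
  { apply Rmult_le_compat_r; lra. }
  rewrite E1 in L. rewrite E1, E2 in *.
  nra.
Qed.

Lemma exists_v (Omega : R -> Prop) (f : nat -> R -> R) (t : nat) (xi : R)
  (HOmega : is_interval Omega)
  (HC1t : C1_on Omega (f t)) (HC1t1 : C1_on Omega (f (S t)))
  (Hsct : strictly_convex_on Omega (f t)) :
  forall x m y n u, Omega x -> Omega m -> Omega y -> Omega n -> x <= u <= m ->
  Derive (f (S t)) y = Derive (f t) x + xi ->
  Derive (f (S t)) n = Derive (f t) m + xi ->
  exists v, Omega v /\ Derive (f (S t)) v = Derive (f t) u + xi.
Proof.
  intros x m y n u Hx Hm Hy Hn Hu Ey En.
  set (lo := Rmin y n). set (hi := Rmax y n).
  assert (Hlohi : lo <= hi) by (unfold lo, hi; apply Rle_trans with y; [apply Rmin_l|apply Rmax_l]).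
  assert (Hlo : Omega lo) by (unfold lo, Rmin; destruct Rle_dec; auto).
  assert (Hhi : Omega hi) by (unfold hi, Rmax; destruct Rle_dec; auto).
  set (cl := fun z => (lo + hi + Rabs (z - lo) - Rabs (z - hi)) / 2).
  assert (Hcl : forall z, lo <= cl z <= hi).
  { intro z. unfold cl. unfold Rabs; destruct Rcase_abs; destruct Rcase_abs; lra. }
  assert (Hclid : forall z, lo <= z <= hi -> cl z = z).
  { intros z Hz. unfold cl. unfold Rabs; destruct Rcase_abs; destruct Rcase_abs; lra. }
  set (H := fun z => Derive (f (S t)) (cl z)).
  assert (Hcont : forall z : R_UniformSpace, continuous H z).
  { intro z. unfold H. apply (continuous_comp cl (Derive (f (S t)))).
    - unfold cl. apply continuity_pt_filterlim. unfold Rdiv.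
      apply continuity_pt_mult; [|apply continuity_pt_const; intros ? ?; reflexivity].
      apply continuity_pt_minus. apply continuity_pt_plus. apply continuity_pt_const; intros ? ?; reflexivity.
      apply (continuity_pt_comp (fun z => z - lo) Rabs). apply continuity_pt_minus. apply derivable_continuous_pt, derivable_pt_id. apply continuity_pt_const; intros ? ?; reflexivity. apply Rcontinuity_abs.
      apply (continuity_pt_comp (fun z => z - hi) Rabs). apply continuity_pt_minus. apply derivable_continuous_pt, derivable_pt_id. apply continuity_pt_const; intros ? ?; reflexivity. apply Rcontinuity_abs.
    - apply HC1t1. apply (HOmega lo _ hi); auto; apply Hcl. }
  assert (Hyin : lo <= y <= hi) by (unfold lo, hi; split; [apply Rmin_l|apply Rmax_l]).
  assert (Hnin : lo <= n <= hi) by (unfold lo, hi; split; [apply Rmin_r|apply Rmax_r]).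
  assert (Hux : Derive (f t) x <= Derive (f t) u).
  { apply (deriv_mono Omega (f t) Hsct HC1t); auto; try lra. apply (HOmega x _ m); auto; lra. }
  assert (Hum : Derive (f t) u <= Derive (f t) m).
  { apply (deriv_mono Omega (f t) Hsct HC1t); auto; try lra. apply (HOmega x _ m); auto; lra. }
  assert (HHy : H y = Derive (f (S t)) y) by (unfold H; rewrite Hclid; auto).
  assert (HHn : H n = Derive (f (S t)) n) by (unfold H; rewrite Hclid; auto).
  destruct (IVT_gen_consistent H y n (Derive (f t) u + xi) Hcont) as [v [Hv Hv']].
  { rewrite HHy, HHn, Ey, En. split.
    - apply Rle_trans with (Derive (f t) x + xi); [apply Rmin_l|lra].
    - apply Rle_trans with (Derive (f t) m + xi); [lra|apply Rmax_r]. }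
  exists v. fold lo hi in Hv.
  split. apply (HOmega lo _ hi); auto; lra.
  unfold H in Hv'. rewrite Hclid in Hv' by lra. exact Hv'.
Qed.

Theorem theorem5 (Omega : R -> Prop) (f : nat -> R -> R) (t : nat)
  (HOmega : is_interval Omega)
  (HC1t : C1_on Omega (f t)) (HC1t1 : C1_on Omega (f (S t)))
  (Hsct : strictly_convex_on Omega (f t))
  (Hsct1 : strictly_convex_on Omega (f (S t)))
  (Hdiff : forall z, Omega z -> ex_derive (Derive (f t)) z)
  (Hconc : concave_on Omega (Derive (f t)))
  (Hle : forall z, Omega z -> Derive (f (S t)) z <= Derive (f t) z) :
  forall (xi x m y n : R), Omega x -> Omega m -> Omega y -> Omega n ->
    x <= m ->
    Derive (f (S t)) y - Derive (f t) x = xi ->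
    Derive (f (S t)) n - Derive (f t) m = xi ->
    skewD f t x y <= skewD f t m n.
Proof.
  intros xi x m y n Hx Hm Hy Hn Hxm E1 E2.
  assert (Ey : Derive (f (S t)) y = Derive (f t) x + xi) by lra.
  assert (En : Derive (f (S t)) n = Derive (f t) m + xi) by lra.
  set (C := 2 * ((m - x) * (Derive (f t) m - Derive (f t) x))).
  assert (HC : 0 <= C).
  { unfold C. pose proof (deriv_mono Omega (f t) Hsct HC1t x m Hx Hm Hxm). nra. }
  set (V := fun u => epsilon (inhabits 0)
     (fun v => Omega v /\ Derive (f (S t)) v = Derive (f t) u + xi)).
  assert (HV : forall u, x <= u <= m ->
     Omega (V u) /\ Derive (f (S t)) (V u) = Derive (f t) u + xi).
  { intros u Hu. unfold V. apply epsilon_spec.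
    apply (exists_v Omega f t xi HOmega HC1t HC1t1 Hsct x m y n u); auto. }
  assert (Hbound : forall N : nat, (0 < N)%nat ->
     - C / INR N <= skewD f t m n - skewD f t x y).
  { intros N HN.
    assert (HNr : 0 < INR N) by (apply lt_0_INR; exact HN).
    set (d := (m - x) / INR N).
    assert (Hd : 0 <= d) by (unfold d; apply Rdiv_le_0_compat; lra).
    set (u := fun k : nat => x + INR k * d).
    assert (HuN : u N = m) by (unfold u, d; field; lra).
    assert (Hu0 : u 0%nat = x) by (unfold u; simpl; ring).
    assert (Hurange : forall k, (k <= N)%nat -> x <= u k <= m).
    { intros k Hk. unfold u. apply le_INR in Hk. split.
      - assert (0 <= INR k) by apply pos_INR. nra.
      - rewrite <- HuN. unfold u. nra. }
    set (w := fun k : nat => if Nat.eqb k 0 then y else if Nat.eqb k N then n else V (u k)).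
    assert (Hw : forall k, (k <= N)%nat ->
       Omega (w k) /\ Derive (f (S t)) (w k) = Derive (f t) (u k) + xi).
    { intros k Hk. unfold w. destruct (Nat.eqb_spec k 0) as [->|H0].
      - rewrite Hu0. auto.
      - destruct (Nat.eqb_spec k N) as [->|H1].
        + rewrite HuN. auto.
        + apply HV. apply Hurange. exact Hk. }
    assert (Hom : forall k, (k <= N)%nat -> Omega (u k)).
    { intros k Hk. apply (HOmega x _ m); auto; apply Hurange; auto. }
    assert (Hind : forall j, (j <= N)%nat ->
       - 2 * d * (Derive (f t) (u j) - Derive (f t) x)
         <= skewD f t (u j) (w j) - skewD f t x y).
    { induction j as [|j IH]; intros Hj.
      - rewrite Hu0. unfold w. simpl. lra.
      - assert (Hj' : (j <= N)%nat) by lia.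
        specialize (IH Hj').
        destruct (Hw j Hj') as [Hwj Ewj].
        destruct (Hw (S j) Hj) as [Hwj1 Ewj1].
        assert (Hus : u (S j) - u j = d) by (unfold u; rewrite S_INR; ring).
        assert (Hule : u j <= u (S j)) by lra.
        pose proof (step_ineq Omega f t xi HC1t HC1t1 Hsct Hsct1 Hconc Hle
           (u j) (u (S j)) (w j) (w (S j)) (Hom j Hj') (Hom (S j) Hj) Hwj Hwj1 Hule Ewj Ewj1) as St.
        rewrite Hus in St. lra. }
    specialize (Hind N (le_n N)).
    rewrite HuN in Hind.
    assert (HwN : w N = n).
    { unfold w. destruct (Nat.eqb_spec N 0) as [E|_]; [lia|]. rewrite Nat.eqb_refl. reflexivity. }
    rewrite HwN in Hind.
    replace (- C / INR N) with (- 2 * d * (Derive (f t) m - Derive (f t) x))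
      by (unfold C, d; field; lra).
    exact Hind. }
  destruct (Rle_or_lt 0 (skewD f t m n - skewD f t x y)) as [H|H]; [lra|].
  exfalso.
  set (D := skewD f t m n - skewD f t x y) in *.
  destruct (archimed_cor1 (- D / (C + 1))) as [N [HN1 HN2]].
  { apply Rdiv_lt_0_compat; lra. }
  specialize (Hbound N HN2).
  assert (HNr : 0 < INR N) by (apply lt_0_INR; exact HN2).
  assert (HiN : 0 < / INR N) by (apply Rinv_0_lt_compat; lra).
  assert (A : (C + 1) * / INR N < - D).
  { apply Rmult_lt_compat_l with (r := C + 1) in HN1; [|lra].
    replace ((C + 1) * (- D / (C + 1))) with (- D) in HN1 by (field; lra). exact HN1. }
  unfold Rdiv in Hbound. nra.
Qed.
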